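(* Let $n,p\ge1$ be integers and let $A=A^{p+1}_{n+1}$ with order $\le$ and multiplication $\odot$ as defined in the context. For all $a,b,c\in A$, if $b\le c$ then $a\odot b\le a\odot c$.
   Context: Order $\mathbb{Z}\times\mathbb{Z}$ lexicographically: $(m,r)\preccurlyeq(k,s)$ iff $m<k$, or $m=k$ and $r\le s$; addition/subtraction of pairs is componentwise, and $\min,\max$ of pairs refer to $\preccurlyeq$. For an integer $n\ge1$ let $L^\omega_{n+1}=\{(m,r)\in\mathbb{Z}^2:(0,0)\preccurlyeq(m,r)\preccurlyeq(n,0)\}$ with $x\ast y=\max\{(0,0),x+y-(n,0)\}$ and $x\to y=\min\{(n,0),(n,0)-x+y\}$. For an integer $p\ge1$ let $L_{p+1}=\{0,1,\dots,p\}$ with $\alpha\ast\beta=\max\{0,\alpha+\beta-p\}$. Define $$A=A^{p+1}_{n+1}=\{\langle(m,r),\alpha\rangle:(m,r)\in L^\omega_{n+1},\ \alpha\in\{0,p\}\}\cup\{\langle(m,r),\alpha\rangle:(0,0)\preccurlyeq(m,r)\preccurlyeq(n-1,0),\ 0<\alpha<p\}.$$ Order: $\langle(m,r),\alpha\rangle\le\langle(k,s),\beta\rangle$ iff one of: (o1) $\alpha\neq0$, $\alpha\le\beta$ and $(m,r)\preccurlyeq(k,s)$; (o2) $\alpha=\beta=0$ and $(k,s)\preccurlyeq(m,r)$; (o3) $\alpha=0$, $\beta\ne0$ and $(n-1,0)\preccurlyeq(m+k,r+s)$. Put $\bot=\langle(n,0),0\rangle$, $\top=\langle(n,0),p\rangle$.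 For $a=\langle(m,r),\alpha\rangle$, $b=\langle(k,s),\beta\rangle\in A$ define $a\odot b$ by: (P1) if $\alpha,\beta\ge1$ and $\alpha+\beta>p$: $a\odot b=\langle(m,r)\ast(k,s),\alpha+\beta-p\rangle$; (P2) if $\alpha,\beta\ge1$ and $\alpha+\beta\le p$: $a\odot b=\langle\min\{(n,0),(2n-(m+k+1),-(r+s))\},0\rangle$; (P3) if $\alpha\ge1$, $\beta=0$: $a\odot b=\langle(m,r)\to(k,s),0\rangle$, and if $\alpha=0$, $\beta\ge1$: $a\odot b=\langle(k,s)\to(m,r),0\rangle$; (P4) if $\alpha=\beta=0$: $a\odot b=\langle\min\{(n,0),(m+k+1,r+s)\},0\rangle$. *)

(* Defs.v *)
From Stdlib Require Import ZArith Bool Lia.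
Open Scope Z_scope.

Definition pair := (Z * Z)%type.

Definition lex_le (x y : pair) : bool :=
  let '(m, r) := x in let '(k, s) := y in
  (m <? k) || ((m =? k) && (r <=? s)).

Definition padd (x y : pair) : pair := (fst x + fst y, snd x + snd y).
Definition psub (x y : pair) : pair := (fst x - fst y, snd x - snd y).
Definition pmin (x y : pair) : pair := if lex_le x y then x else y.
Definition pmax (x y : pair) : pair := if lex_le x y then y else x.

Definition inLw (n : Z) (x : pair) : bool := lex_le (0, 0) x && lex_le x (n, 0).
Definition starw (n : Z) (x y : pair) : pair := pmax (0, 0) (psub (padd x y) (n, 0)).
Definition implw (n : Z) (x y : pair) : pair := pmin (n, 0) (padd (psub (n, 0) x) y).

(* Elements <(m,r), alpha> of A^{p+1}_{n+1} *)
Definition elt := (pair * Z)%type.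

Definition inA (n p : Z) (a : elt) : bool :=
  let '(x, al) := a in
  (inLw n x && ((al =? 0) || (al =? p)))
  || (lex_le (0, 0) x && lex_le x (n - 1, 0) && (0 <? al) && (al <? p)).

Definition leA (n p : Z) (a b : elt) : bool :=
  let '(x, al) := a in let '(y, be) := b in
  (negb (al =? 0) && (al <=? be) && lex_le x y)
  || ((al =? 0) && (be =? 0) && lex_le y x)
  || ((al =? 0) && negb (be =? 0) && lex_le (n - 1, 0) (padd x y)).

Definition odot (n p : Z) (a b : elt) : elt :=
  let '(x, al) := a in let '(y, be) := b in
  if (1 <=? al) && (1 <=? be) then
    if p <? al + be then (starw n x y, al + be - p)
    else (pmin (n, 0) (2 * n - (fst x + fst y + 1), - (snd x + snd y)), 0)
  else if (1 <=? al) && (be =? 0) then (implw n x y, 0)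
  else if (al =? 0) && (1 <=? be) then (implw n y x, 0)
  else (pmin (n, 0) (fst x + fst y + 1, snd x + snd y), 0).

(* Main.v *)
Require Import Defs.
From Stdlib Require Import ZArith Bool Lia.
Open Scope Z_scope.

Lemma lexP (x y : pair) :
  BoolSpec (fst x < fst y \/ (fst x = fst y /\ snd x <= snd y))
           (fst y < fst x \/ (fst x = fst y /\ snd y < snd x)) (lex_le x y).
Proof.
  destruct x as [m r], y as [k s]; unfold lex_le; cbn.
  destruct (Z.ltb_spec m k); cbn; [constructor; lia|].
  destruct (Z.eqb_spec m k); cbn; [|constructor; lia].
  destruct (Z.leb_spec r s); constructor; lia.
Qed.

Arguments lex_le : simpl never.
Ltac prune := try reflexivity; try discriminate; try (exfalso; lia).

Ltac step :=
  match goal with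
  | H : context [?x <? ?y] |- _ => destruct (Z.ltb_spec x y); cbn in *; prune
  | H : context [?x <=? ?y] |- _ => destruct (Z.leb_spec x y); cbn in *; prune
  | H : context [?x =? ?y] |- _ => destruct (Z.eqb_spec x y); cbn in *; prune
  | H : context [lex_le ?x ?y] |- _ => destruct (lexP x y); cbn in *; prune
  | |- context [?x <? ?y] => destruct (Z.ltb_spec x y); cbn in *; prune
  | |- context [?x <=? ?y] => destruct (Z.leb_spec x y); cbn in *; prune
  | |- context [?x =? ?y] => destruct (Z.eqb_spec x y); cbn in *; prune
  | |- context [lex_le ?x ?y] => destruct (lexP x y); cbn in *; prune
  end.

Ltac zstep :=
  match goal with
  | H : context [?x <? ?y] |- _ => destruct (Z.ltb_spec x y); cbn in *; prune
  | H : context [?x <=? ?y] |- _ => destruct (Z.leb_spec x y); cbn in *; prune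
  | H : context [?x =? ?y] |- _ => destruct (Z.eqb_spec x y); cbn in *; prune
  | |- context [?x <? ?y] => destruct (Z.ltb_spec x y); cbn in *; prune
  | |- context [?x <=? ?y] => destruct (Z.leb_spec x y); cbn in *; prune
  | |- context [?x =? ?y] => destruct (Z.eqb_spec x y); cbn in *; prune
  end.

Theorem lemma2p2 (n p : Z) (hn : 1 <= n) (hp : 1 <= p) (a b c : elt) :
  inA n p a = true -> inA n p b = true -> inA n p c = true ->
  leA n p b c = true -> leA n p (odot n p a b) (odot n p a c) = true.
Proof.
  destruct a as [[m1 r1] a1], b as [[m2 r2] a2], c as [[m3 r3] a3].
  unfold inA, leA, odot, inLw, starw, implw, pmin, pmax, padd, psub.
  remember (2 * n) as N2 eqn:HN2.
  assert (HN : N2 = n + n) by lia. clear HN2.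
  cbn.
  intros H1 H2 H3 H4.
  repeat zstep. all: repeat step.
Qed.
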